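(* There are no $1$-oriented and no $2$-oriented Spherical Diagrams.
   Context: A geodesic arc on the unit sphere in $\mathbb R^3$ is the unique shortest curve joining two non-antipodal points. An arc $a$ blocks an arc $b$ (equivalently, $b$ hits $a$) if an endpoint of $b$ lies in the relative interior of $a$. A Spherical Diagram (SD) is a finite non-empty collection $\mathcal D$ of pairwise interior-disjoint geodesic arcs on the unit sphere such that each arc of $\mathcal D$ is blocked by arcs of $\mathcal D$ at each of its endpoints. An SD $\mathcal D$ is $k$-oriented if there exist a set $P$ of $k$ points on the unit sphere (poles), no two antipodal, and a function $f\colon\mathcal D\to P$ such that each arc $a\in\mathcal D$ lies on a great circle through $f(a)$ but contains neither $f(a)$ nor its antipode $-f(a)$. *)

(* Defs.v *)
From HB Require Import structures.
From mathcomp Require Import all_boot all_order all_algebra.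
From mathcomp Require Import reals.
Set Implicit Arguments. Unset Strict Implicit. Unset Printing Implicit Defensive.
Import Order.TTheory GRing.Theory Num.Theory.
Local Open Scope ring_scope.

Section Spherical.
Variable R : realType.
Notation vec := 'rV[R]_3.

Definition dot (u v : vec) : R := \sum_(i < 3) u 0 i * v 0 i.

Definition on_sphere (x : vec) : Prop := dot x x = 1.

(* an arc is represented by its ordered pair of endpoints *)
Definition sarc := (vec * vec)%type.

Definition geodesic_arc (a : sarc) : Prop :=
  on_sphere a.1 /\ on_sphere a.2 /\ a.1 <> a.2 /\ a.1 <> - a.2.

(* points of the (closed) shortest arc from a.1 to a.2: unit vectors that are
   nonnegative combinations of the endpoints *)
Definition arc_pts (a : sarc) (x : vec) : Prop :=
  on_sphere x /\ exists s t : R, 0 <= s /\ 0 <= t /\ x = s *: a.1 + t *: a.2.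

Definition arc_relint (a : sarc) (x : vec) : Prop :=
  on_sphere x /\ exists s t : R, 0 < s /\ 0 < t /\ x = s *: a.1 + t *: a.2.

Definition blocks (a b : sarc) : Prop := arc_relint a b.1 \/ arc_relint a b.2.

Definition spherical_diagram (D : seq sarc) : Prop :=
  D <> [::] /\
  (forall a, a \in D -> geodesic_arc a) /\
  (forall a b, a \in D -> b \in D -> a <> b ->
     forall x, ~ (arc_relint a x /\ arc_relint b x)) /\
  (forall b, b \in D ->
     (exists2 a, a \in D & arc_relint a b.1) /\
     (exists2 a, a \in D & arc_relint a b.2)).

(* great circle = sphere intersected with a plane through the origin with
   normal n <> 0; the arc a lies on a great circle through p *)
Definition on_great_circle_through (a : sarc) (p : vec) : Prop :=
  exists n : vec, n <> 0 /\ dot n p = 0 /\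
    (forall x, arc_pts a x -> dot n x = 0).

Definition k_oriented (k : nat) (D : seq sarc) : Prop :=
  exists P : seq vec,
    size P = k /\ uniq P /\
    (forall p, p \in P -> on_sphere p) /\
    (forall p q, p \in P -> q \in P -> p <> - q) /\
    exists f : sarc -> vec,
      forall a, a \in D ->
        f a \in P /\ on_great_circle_through a (f a) /\
        ~ arc_pts a (f a) /\ ~ arc_pts a (- f a).

End Spherical.

(* Main.v *)
Require Import Defs.
From HB Require Import structures.
From mathcomp Require Import all_boot all_order all_algebra reals.
From mathcomp Require Import ring lra.
Set Implicit Arguments. Unset Strict Implicit. Unset Printing Implicit Defensive.
Import Order.TTheory GRing.Theory Num.Theory.
Local Open Scope ring_scope.
Section S.
Variable R : realType.
Notation vec := 'rV[R]_3.
Definition i0 : 'I_3 := @Ordinal 3 0 isT.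
Definition i1 : 'I_3 := @Ordinal 3 1 isT.
Definition i2 : 'I_3 := @Ordinal 3 2 isT.
Lemma dotE (u v : vec) : dot u v = u 0 i0 * v 0 i0 + u 0 i1 * v 0 i1 + u 0 i2 * v 0 i2.
Proof. rewrite /dot !big_ord_recr big_ord0 /= add0r.
have -> : (widen_ord (leqnSn 2) (widen_ord (leqnSn 1) ord_max)) = i0 by apply: val_inj.
have -> : (widen_ord (leqnSn 2) ord_max) = i1 by apply: val_inj.
have -> : (@ord_max 2) = i2 by apply: val_inj.
by []. Qed.
Lemma eq_vec (u v : vec) : u 0 i0 = v 0 i0 -> u 0 i1 = v 0 i1 -> u 0 i2 = v 0 i2 -> u = v.
Proof. move=> h0 h1 h2; apply/rowP => j.
case: j => [[|[|[|k]]] Hj] //.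
- by have -> : Ordinal Hj = i0 by apply: val_inj.
- by have -> : Ordinal Hj = i1 by apply: val_inj.
- by have -> : Ordinal Hj = i2 by apply: val_inj.
Qed.
Definition cross (u v : vec) : vec :=
  \row_(j < 3) (if (j : nat) == 0%N then u 0 i1 * v 0 i2 - u 0 i2 * v 0 i1
               else if (j : nat) == 1%N then u 0 i2 * v 0 i0 - u 0 i0 * v 0 i2
               else u 0 i0 * v 0 i1 - u 0 i1 * v 0 i0).

Implicit Types u v w x m n : vec.
Ltac vt := apply: eq_vec; rewrite ?dotE /cross !mxE /=; ring.
Ltac dt := rewrite !dotE /cross ?mxE /=; ring.

Lemma dotC u v : dot u v = dot v u. Proof. dt. Qed.
Lemma dotDl u v w : dot (u + v) w = dot u w + dot v w. Proof. rewrite !dotE !mxE; ring. Qed.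
Lemma dotZl (a : R) u w : dot (a *: u) w = a * dot u w. Proof. rewrite !dotE !mxE; ring. Qed.
Lemma dotNl u w : dot (- u) w = - dot u w. Proof. rewrite !dotE !mxE; ring. Qed.
Lemma dot0l w : dot 0 w = 0. Proof. rewrite !dotE !mxE; ring. Qed.
Lemma dotDr u v w : dot w (u + v) = dot w u + dot w v. Proof. rewrite !dotE !mxE; ring. Qed.
Lemma dotZr (a : R) u w : dot w (a *: u) = a * dot w u. Proof. rewrite !dotE !mxE; ring. Qed.
Lemma dotNr u w : dot w (- u) = - dot w u. Proof. rewrite !dotE !mxE; ring. Qed.
Lemma dot0r w : dot w 0 = 0. Proof. rewrite !dotE !mxE; ring. Qed.
Lemma cross_self u : cross u u = 0. Proof. vt. Qed.
Lemma crossDr u v w : cross u (v + w) = cross u v + cross u w. Proof. vt. Qed.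
Lemma crossZr (a : R) u v : cross u (a *: v) = a *: cross u v. Proof. vt. Qed.
Lemma crossNr u v : cross u (- v) = - cross u v. Proof. vt. Qed.
Lemma crossC u v : cross u v = - cross v u. Proof. vt. Qed.
Lemma dot_cross_l u v : dot (cross u v) u = 0. Proof. dt. Qed.
Lemma dot_cross_r u v : dot (cross u v) v = 0. Proof. dt. Qed.
Lemma cross_cross x m n : cross x (cross m n) = dot x n *: m - dot x m *: n. Proof. vt. Qed.
Lemma lagrange (a b : vec) : dot (cross a b) (cross a b) = dot a a * dot b b - dot a b ^+ 2. Proof. dt. Qed.
Lemma recip (a b x : vec) : dot (cross a b) (cross a b) *: x =
  dot x (cross b (cross a b)) *: a + dot x (cross (cross a b) a) *: b + dot x (cross a b) *: cross a b.
Proof. vt. Qed.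
Lemma dot_self_ge0 v : 0 <= dot v v.
Proof. rewrite dotE; nra. Qed.
Lemma dot_self0 v : dot v v = 0 -> v = 0.
Proof. rewrite dotE => h.
have h0 : v 0 i0 = 0 by nra.
have h1 : v 0 i1 = 0 by nra.
have h2 : v 0 i2 = 0 by nra.
by apply: eq_vec; rewrite mxE. Qed.
Lemma cross0r u : cross u 0 = 0. Proof. vt. Qed.
Lemma dot_self_neq0 v : v <> 0 -> dot v v != 0.
Proof. by move=> hv; apply/eqP => /dot_self0. Qed.

Ltac dexp := rewrite ?dotDl ?dotDr ?dotNl ?dotNr ?dotZl ?dotZr ?dot0l ?dot0r.

Lemma cross_ne0 (a b : vec) : dot a a = 1 -> dot b b = 1 -> a <> b -> a <> - b -> cross a b <> 0.
Proof.
move=> ha hb hab hanb hc.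
have := lagrange a b; rewrite hc dot0l ha hb => e.
have : (dot a b - 1) * (dot a b + 1) = 0.
  by rewrite (_ : _ * _ = -(1*1 - dot a b ^+ 2)); [rewrite -e oppr0 | ring].
move/eqP; rewrite mulf_eq0 => /orP[] /eqP h.
- apply: hab; apply: subr0_eq; apply: dot_self0.
  dexp; rewrite (dotC b a) ha hb; rewrite -(subrK 1 (dot a b)) h; ring.
- apply: hanb; apply: subr0_eq; rewrite opprK; apply: dot_self0.
  dexp; rewrite (dotC b a) ha hb; rewrite -(addrK 1 (dot a b)) h; ring.
Qed.

Lemma par (r n m x : vec) : dot r r = 1 -> n <> 0 -> m <> 0 -> dot r n = 0 -> dot m r = 0 ->
  dot x m = 0 -> dot x n = 0 ->
  (exists l, x = l *: r) \/ (forall z, dot z m = 0 -> dot z n = 0).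
Proof.
move=> hr hn hm hrn hmr hxm hxn.
case: (eqVneq (cross m n) 0) => hk.
- right. move: (cross_cross n m n); rewrite hk cross0r => /esym/subr0_eq e.
  have hnn := dot_self_neq0 hn.
  have hnm : dot n m != 0.
    apply/eqP => h0; rewrite h0 scale0r in e; move/eqP: e; rewrite scaler_eq0 (negbTE hnn) /=.
    by move/eqP.
  move=> z hz; have := congr1 (dot z) e; rewrite !dotZr hz mulr0 => /esym/eqP.
  by rewrite mulf_eq0 (negbTE hnm) /= => /eqP.
- left. set k := cross m n in hk *.
  have hx : cross x k = 0 by rewrite /k cross_cross hxm hxn !scale0r subr0.
  have hr' : cross r k = 0 by rewrite /k cross_cross hrn dotC hmr !scale0r subr0.
  move: (cross_cross k x k); rewrite -/k hx cross0r => /esym/subr0_eq ex.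
  move: (cross_cross k r k); rewrite -/k hr' cross0r => /esym/subr0_eq er.
  have hkk := dot_self_neq0 (elimN eqP hk).
  have hkr : dot k r != 0.
    apply/eqP => h0; rewrite h0 scale0r in er; move/eqP: er; rewrite scaler_eq0 (negbTE hkk) /=.
    by move/eqP => r0; move: hr; rewrite r0 dot0l => /eqP; rewrite eq_sym oner_eq0.
  exists (dot k x / dot k r); apply: (scalerI hkk).
  by rewrite ex scalerA mulrC -scalerA er scalerA divfK.
Qed.
Section Arc.
Variables (a1 a2 r m n : vec).
Hypotheses (hr : dot r r = 1) (hn : n <> 0) (hm : m <> 0) (hrn : dot r n = 0) (hmr : dot m r = 0)
  (hm1 : dot m a1 = 0) (hm2 : dot m a2 = 0) (hc : cross a1 a2 <> 0)
  (hav : forall al be l : R, 0 <= al -> 0 <= be -> l != 0 -> al *: a1 + be *: a2 = l *: r -> False).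

Lemma K1 : 0 < dot a1 n -> 0 < dot a2 n.
Proof.
move=> h1; rewrite ltNge; apply/negP => h2.
set y := (- dot a2 n) *: a1 + dot a1 n *: a2.
have hym : dot y m = 0 by rewrite /y; dexp; rewrite (dotC a1 m) (dotC a2 m) hm1 hm2; ring.
have hyn : dot y n = 0 by rewrite /y; dexp; ring.
case: (par hr hn hm hrn hmr hym hyn) => [[l hl]|hz].
- case: (eqVneq l 0) => hl0.
  + move: hl; rewrite hl0 scale0r => hy.
    have : cross a1 y = dot a1 n *: cross a1 a2 by rewrite /y crossDr !crossZr cross_self scaler0 add0r.
    rewrite hy cross0r => /esym/eqP; rewrite scaler_eq0 => /orP[/eqP|/eqP //].
    by move=> e; move: h1; rewrite e ltxx.
  + apply: (hav _ _ hl0 hl); last exact: ltW.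
    by rewrite oppr_ge0.
- by move: h1; rewrite (hz _ (etrans (dotC _ _) hm1)) ltxx.
Qed.

Lemma K2 (u : vec) : dot r u != 0 -> 0 < dot a1 n -> 0 < dot a2 n ->
  dot a1 u * dot a2 n <> dot a2 u * dot a1 n.
Proof.
move=> hru h1 h2 he.
set y := dot a2 n *: a1 + (- dot a1 n) *: a2.
have hym : dot y m = 0 by rewrite /y; dexp; rewrite (dotC a1 m) (dotC a2 m) hm1 hm2; ring.
have hyn : dot y n = 0 by rewrite /y; dexp; ring.
case: (par hr hn hm hrn hmr hym hyn) => [[l hl]|hz].
- have hl0 : l = 0.
    have : dot y u = l * dot r u by rewrite hl dotZl.
    have -> : dot y u = 0 by rewrite /y; dexp; rewrite (mulrC (dot a2 n)) he; ring.
    by move/esym/eqP; rewrite mulf_eq0 (negbTE hru) orbF => /eqP.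
  move: hl; rewrite hl0 scale0r => hy.
  have : cross a1 y = (- dot a1 n) *: cross a1 a2 by rewrite /y crossDr !crossZr cross_self scaler0 add0r.
  rewrite hy cross0r => /esym/eqP; rewrite scaler_eq0 oppr_eq0 => /orP[/eqP|/eqP //].
  by move=> e; move: h1; rewrite e ltxx.
- by move: h1; rewrite (hz _ (etrans (dotC _ _) hm1)) ltxx.
Qed.
End Arc.
Lemma mediant (s t A1 A2 N1 N2 : R) : 0 < s -> 0 < t -> 0 < N1 -> 0 < N2 ->
  A1 / N1 <= (s * A1 + t * A2) / (s * N1 + t * N2) ->
  A2 / N2 <= (s * A1 + t * A2) / (s * N1 + t * N2) -> A1 * N2 = A2 * N1.
Proof.
move=> hs ht h1 h2; have hM : 0 < s * N1 + t * N2 by nra.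
rewrite ler_pdivrMr // mulrAC ler_pdivlMr // => e1.
rewrite ler_pdivrMr // mulrAC ler_pdivlMr // => e2.
apply/eqP; rewrite eq_le; apply/andP; split; nra.
Qed.

Lemma seq_max (T : eqType) (F : T -> R) (s : seq T) : s != [::] ->
  exists2 e, e \in s & forall y, y \in s -> F y <= F e.
Proof.
elim: s => [//|x s IH] _.
case: (eqVneq s [::]) => [->|hs].
  by exists x; rewrite ?mem_head // => y; rewrite inE => /eqP ->.
case: (IH hs) => e he hmax.
case: (lerP (F x) (F e)) => hxe.
  exists e; first by rewrite inE he orbT.
  by move=> y; rewrite inE => /orP[/eqP ->|/hmax].
exists x; first exact: mem_head.
move=> y; rewrite inE => /orP[/eqP ->//|/hmax h]; exact: (le_trans h (ltW hxe)).
Qed.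
Lemma pos_case (D : seq (sarc R)) (n u : vec) :
  spherical_diagram D ->
  (forall a, a \in D -> 0 < dot a.1 n -> 0 < dot a.2 n) ->
  (forall a, a \in D -> 0 < dot a.2 n -> 0 < dot a.1 n) ->
  (forall a, a \in D -> 0 < dot a.1 n -> 0 < dot a.2 n ->
     dot a.1 u * dot a.2 n <> dot a.2 u * dot a.1 n) ->
  (exists2 b, b \in D & 0 < dot b.1 n) -> False.
Proof.
move=> [_ [_ [_ hbl]]] k1 k1' k2 [b hb hbp].
set E := [seq e <- [seq a.1 | a <- D] ++ [seq a.2 | a <- D] | 0 < dot e n].
have memE : forall e, (e \in E) =
    (0 < dot e n) && ((e \in [seq a.1 | a <- D]) || (e \in [seq a.2 | a <- D])).
  by move=> e; rewrite mem_filter mem_cat.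
have hE : E != [::].
  apply/eqP => h; have : b.1 \in E by rewrite memE hbp (map_f (fun a => a.1) hb).
  by rewrite h.
case: (seq_max (fun e => dot e u / dot e n) hE) => e heE hmax.
have claim : forall a, a \in D -> arc_relint a e -> False.
  move=> a ha [_ [s [t [hs [ht he]]]]].
  move: (heE); rewrite memE => /andP[hen _].
  have hN : 0 < s * dot a.1 n + t * dot a.2 n by move: hen; rewrite he dotDl !dotZl.
  have [h1 h2] : 0 < dot a.1 n /\ 0 < dot a.2 n.
    have h12 : 0 < dot a.1 n \/ 0 < dot a.2 n.
      case: (lerP (dot a.1 n) 0) => q1; last by left.
      case: (lerP (dot a.2 n) 0) => q2; last by right.
      exfalso; nra.
    case: h12 => q.
      by split; [done | exact: (k1 a ha q)].
    by split; [exact: (k1' a ha q) | done].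
  have m1 := hmax a.1; have m2 := hmax a.2; rewrite /= in m1 m2.
  have Fe : dot e u / dot e n =
     (s * dot a.1 u + t * dot a.2 u) / (s * dot a.1 n + t * dot a.2 n) by rewrite he !dotDl !dotZl.
  rewrite Fe in m1 m2.
  apply: (k2 a ha h1 h2); apply: (mediant hs ht h1 h2).
  + by apply: m1; rewrite memE h1 (map_f (fun a => a.1) ha).
  + by apply: m2; rewrite memE h2 (map_f (fun a => a.2) ha) orbT.
move: heE; rewrite memE => /andP[_ /orP[]] /mapP[c hc] hec; subst e.
- by case: (hbl c hc) => [[a ha hrel] _]; exact: (claim a ha hrel).
- by case: (hbl c hc) => [_ [a ha hrel]]; exact: (claim a ha hrel).
Qed.
Lemma zero_case (D : seq (sarc R)) (n : vec) : spherical_diagram D -> n <> 0 ->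
  (forall b, b \in D -> dot b.1 n = 0 /\ dot b.2 n = 0) -> False.
Proof.
move=> [hne [hgeo [hdis hbl]]] hn hz.
case: D hne hgeo hdis hbl hz => [//|b D'] _ hgeo hdis hbl hz.
have hb : b \in b :: D' := mem_head _ _.
case: (hbl b hb) => [[a ha [_ [s [t [hs [ht he]]]]]] _].
have [ga1 [ga2 [g12 g12']]] := hgeo a ha.
have [gb1 [gb2 [gb12 gb12']]] := hgeo b hb.
have hcb := cross_ne0 gb1 gb2 gb12 gb12'.
have hab : a <> b.
  move=> eab; subst a.
  have := congr1 (cross b.1) he; rewrite crossDr !crossZr cross_self scaler0 add0r.
  move/esym/eqP; rewrite scaler_eq0 => /orP[/eqP h|/eqP h].
  - by move: ht; rewrite h ltxx.
  - exact: hcb.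
have hc := cross_ne0 ga1 ga2 g12 g12'.
have [hn1 hn2] := hz a ha.
have [hb1 hb2] := hz b hb.
have hcn : cross (cross a.1 a.2) n = 0.
  by rewrite crossC cross_cross (dotC n a.2) hn2 (dotC n a.1) hn1 !scale0r subrr oppr0.
have hbc : dot b.2 (cross a.1 a.2) = 0.
  move: (cross_cross n (cross a.1 a.2) n); rewrite hcn cross0r => /esym/subr0_eq e.
  have := congr1 (dot b.2) e; rewrite !dotZr hb2 mulr0 => /eqP.
  by rewrite mulf_eq0 (negbTE (dot_self_neq0 hn)) /= => /eqP.
have hcc := dot_self_neq0 hc.
set c := cross a.1 a.2 in hc hcn hbc hcc.
set al := dot b.2 (cross a.2 c) / dot c c.
set be := dot b.2 (cross c a.1) / dot c c.
have hb2e : b.2 = al *: a.1 + be *: a.2.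
  apply: (scalerI hcc).
  rewrite (recip a.1 a.2 b.2) -/c hbc scale0r addr0 scalerDr !scalerA /al /be.
  by rewrite !(mulrC (dot c c)) !divfK.
set K := `|al| / s + `|be| / t + 1.
have hc1 : 0 < K * s + al.
  rewrite /K !mulrDl divfK ?gt_eqF // mul1r.
  have := ler_norm (- al); rewrite normrN => h1.
  have : 0 <= `|be| / t * s by rewrite mulr_ge0 // ?divr_ge0 // ltW.
  lra.
have hc2 : 0 < K * t + be.
  rewrite /K !mulrDl [X in _ + X + _]divfK ?gt_eqF // mul1r.
  have := ler_norm (- be); rewrite normrN => h1.
  have : 0 <= `|al| / s * t by rewrite mulr_ge0 // ?divr_ge0 // ltW.
  lra.
have hK : 0 < K.
  rewrite /K; have : 0 <= `|al| / s by rewrite divr_ge0 // ltW.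
  have : 0 <= `|be| / t by rewrite divr_ge0 // ltW.
  lra.
set v := K *: b.1 + b.2.
have hv : v = (K * s + al) *: a.1 + (K * t + be) *: a.2.
  by rewrite /v he hb2e; apply: eq_vec; rewrite !mxE; ring.
have hv0 : v <> 0.
  move=> v0; have := congr1 (cross a.1) hv.
  rewrite v0 cross0r crossDr !crossZr cross_self scaler0 add0r -/c.
  move/esym/eqP; rewrite scaler_eq0 => /orP[/eqP h|/eqP h].
  - by move: hc2; rewrite h ltxx.
  - exact: hc.
have hvv : 0 < dot v v by rewrite lt_def dot_self_neq0 // dot_self_ge0.
set rho := Num.sqrt (dot v v).
have hrho : 0 < rho by rewrite sqrtr_gt0.
set x := rho^-1 *: v.
have hx : on_sphere x.
  rewrite /on_sphere /x dotZl dotZr -(sqr_sqrtr (ltW hvv)) -/rho.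
  by field; rewrite gt_eqF.
apply: (hdis a b ha hb hab x); split.
- split => //; exists (rho^-1 * (K * s + al)), (rho^-1 * (K * t + be)).
  split; first by rewrite mulr_gt0 ?invr_gt0.
  split; first by rewrite mulr_gt0 ?invr_gt0.
  by rewrite /x hv scalerDr !scalerA.
- split => //; exists (rho^-1 * K), rho^-1.
  split; first by rewrite mulr_gt0 ?invr_gt0.
  split; first by rewrite invr_gt0.
  by rewrite /x /v scalerDr scalerA.
Qed.
Lemma arc_K (a : sarc R) (r n u : vec) : geodesic_arc a -> dot r r = 1 -> n <> 0 ->
  dot r n = 0 -> dot r u != 0 -> on_great_circle_through a r -> ~ arc_pts a r -> ~ arc_pts a (- r) ->
  [/\ (0 < dot a.1 n -> 0 < dot a.2 n), (0 < dot a.2 n -> 0 < dot a.1 n) &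
      (0 < dot a.1 n -> 0 < dot a.2 n -> dot a.1 u * dot a.2 n <> dot a.2 u * dot a.1 n)].
Proof.
move=> [g1 [g2 [g12 g12']]] hr hn hrn hru [m [hm [hmr hmx]]] npr npr'.
have hm1 : dot m a.1 = 0.
  apply: hmx; split => //; exists 1, 0; split; first exact: ler01.
  by split; [exact: lexx | rewrite scale1r scale0r addr0].
have hm2 : dot m a.2 = 0.
  apply: hmx; split => //; exists 0, 1; split; first exact: lexx.
  by split; [exact: ler01 | rewrite scale1r scale0r add0r].
have hc := cross_ne0 g1 g2 g12 g12'.
have hmr' : dot m r = 0 by [].
have hav : forall al be l : R, 0 <= al -> 0 <= be -> l != 0 ->
    al *: a.1 + be *: a.2 = l *: r -> False.
  move=> al be l hal hbe hl e.
  have [hlt|hgt|heq] := ltrgtP l 0.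
  - apply: npr'; split; first by rewrite /on_sphere dotNl dotNr opprK.
    exists (al / - l), (be / - l).
    have hl' : 0 < - l by rewrite oppr_gt0.
    split; first by rewrite divr_ge0 // ltW.
    split; first by rewrite divr_ge0 // ltW.
    rewrite !(mulrC _ (- l)^-1) -!scalerA -scalerDr e scalerA invrN mulNr mulVf //.
    by rewrite scaleN1r.
  - apply: npr; split => //.
    exists (al / l), (be / l).
    split; first by rewrite divr_ge0 // ltW.
    split; first by rewrite divr_ge0 // ltW.
    rewrite !(mulrC _ l^-1) -!scalerA -scalerDr e scalerA mulVf //.
    by rewrite scale1r.
  - by move: hl; rewrite heq eqxx.
split.
- exact: (K1 hr hn hm hrn hmr hm1 hm2 hc hav).
- apply: (K1 hr hn hm hrn hmr hm2 hm1).
    by rewrite crossC => /eqP; rewrite oppr_eq0 => /eqP.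
  by move=> al be l h1 h2 h3 e; apply: (hav be al l h2 h1 h3); rewrite addrC.
- exact: (K2 hr hn hm hrn hmr hm1 hm2 hc hru).
Qed.
Lemma core (D : seq (sarc R)) (p q n : vec) : spherical_diagram D ->
  dot p p = 1 -> dot q q = 1 -> p <> - q -> n <> 0 -> dot p n = 0 -> dot q n = 0 ->
  (forall a, a \in D -> exists r, (r = p \/ r = q) /\ on_great_circle_through a r /\
      ~ arc_pts a r /\ ~ arc_pts a (- r)) -> False.
Proof.
move=> hsd hp hq hpq hn hpn hqn hf.
set u := p + q.
have hd : 1 + dot p q != 0.
  apply/eqP => h; have h' : dot p q = -1 by lra.
  apply: hpq; apply/eqP; rewrite -addr_eq0; apply/eqP; apply: dot_self0.
  dexp; rewrite hp hq (dotC q p) h'; ring.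
have hpu : dot p u != 0 by rewrite /u dotDr hp.
have hqu : dot q u != 0 by rewrite /u dotDr hq dotC addrC.
have [_ [hgeo _]] := hsd.
have data : forall n', n' <> 0 -> dot p n' = 0 -> dot q n' = 0 -> forall a, a \in D ->
   [/\ (0 < dot a.1 n' -> 0 < dot a.2 n'), (0 < dot a.2 n' -> 0 < dot a.1 n') &
      (0 < dot a.1 n' -> 0 < dot a.2 n' -> dot a.1 u * dot a.2 n' <> dot a.2 u * dot a.1 n')].
  move=> n' hn' hp' hq' a ha.
  have [r [hr [ogc [n1 n2]]]] := hf a ha.
  case: hr => hr; subst r.
  - exact: (arc_K (hgeo a ha) hp hn' hp' hpu ogc n1 n2).
  - exact: (arc_K (hgeo a ha) hq hn' hq' hqu ogc n1 n2).
have go : forall n', n' <> 0 -> dot p n' = 0 -> dot q n' = 0 ->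
    (exists2 b, b \in D & 0 < dot b.1 n' \/ 0 < dot b.2 n') -> False.
  move=> n' hn' hp' hq' [b hb hbp].
  apply: (@pos_case D n' u hsd).
  - by move=> a ha; case: (data n' hn' hp' hq' a ha).
  - by move=> a ha; case: (data n' hn' hp' hq' a ha).
  - by move=> a ha; case: (data n' hn' hp' hq' a ha).
  exists b => //; case: hbp => // h.
  by case: (data n' hn' hp' hq' b hb) => _ k _; exact: k.
have hn' : - n <> 0 by move=> /eqP; rewrite oppr_eq0 => /eqP.
have hpn' : dot p (- n) = 0 by rewrite dotNr hpn oppr0.
have hqn' : dot q (- n) = 0 by rewrite dotNr hqn oppr0.
case: (boolP (has (fun b : sarc R => (dot b.1 n != 0) || (dot b.2 n != 0)) D)).
- move/hasP => [b hb /orP[]] hne.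
  + have [hlt|hgt|heq] := ltrgtP (dot b.1 n) 0.
    * by apply: (go _ hn' hpn' hqn'); exists b => //; left; rewrite dotNr oppr_gt0.
    * by apply: (go _ hn hpn hqn); exists b => //; left.
    * by move: hne; rewrite heq eqxx.
  + have [hlt|hgt|heq] := ltrgtP (dot b.2 n) 0.
    * by apply: (go _ hn' hpn' hqn'); exists b => //; right; rewrite dotNr oppr_gt0.
    * by apply: (go _ hn hpn hqn); exists b => //; right.
    * by move: hne; rewrite heq eqxx.
- move/hasPn => hz; apply: (zero_case hsd hn) => b hb.
  by move: (hz b hb); rewrite negb_or !negbK => /andP[/eqP -> /eqP ->].
Qed.
Definition mkv (x y z : R) : vec :=
  \row_(j < 3) (if (j : nat) == 0%N then x else if (j : nat) == 1%N then y else z).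

Lemma exists_perp (p : vec) : dot p p = 1 -> exists n : vec, n <> 0 /\ dot p n = 0.
Proof.
move=> hp.
case: (eqVneq (cross p (mkv 1 0 0)) 0) => h0; last first.
  by exists (cross p (mkv 1 0 0)); split; [apply/eqP | rewrite dotC dot_cross_l].
case: (eqVneq (cross p (mkv 0 1 0)) 0) => h1; last first.
  by exists (cross p (mkv 0 1 0)); split; [apply/eqP | rewrite dotC dot_cross_l].
have c1 := congr1 (fun w : vec => w 0 i1) h0.
have c2 := congr1 (fun w : vec => w 0 i2) h0.
have c3 := congr1 (fun w : vec => w 0 i2) h1.
rewrite /cross /mkv /= !mxE /= in c1 c2 c3.
move: hp; rewrite dotE; nra.
Qed.
End S.

Theorem mainTheorem8 (R : realType) (D : seq (sarc R)) :
  spherical_diagram D -> ~ k_oriented 1 D /\ ~ k_oriented 2 D.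
Proof.
move=> hsd; split.
- move=> [P [hs [hu [hsph [hant [f hf]]]]]].
  case: P hs hu hsph hant hf => [|p [|p' P']] //= _ _ hsph hant hf.
  have hp := hsph p (mem_head _ _).
  have hpp := hant p p (mem_head _ _) (mem_head _ _).
  have [n [hn hpn]] := exists_perp hp.
  apply: (core hsd hp hp hpp hn hpn hpn) => a ha.
  have [hfa [ogc [n1 n2]]] := hf a ha.
  move: hfa; rewrite inE => /eqP hfa.
  by exists (f a); split; [left | ].
- move=> [P [hs [hu [hsph [hant [f hf]]]]]].
  case: P hs hu hsph hant hf => [|p [|q [|p' P']]] //= _ hu hsph hant hf.
  have hpin : p \in [:: p; q] by rewrite mem_head.
  have hqin : q \in [:: p; q] by rewrite !inE eqxx orbT.
  have hp := hsph p hpin.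
  have hq := hsph q hqin.
  have hpq := hant p q hpin hqin.
  have hpq' : p <> q by move: hu; rewrite !inE andbT => /eqP.
  have hn := cross_ne0 hp hq hpq' hpq.
  apply: (core hsd hp hq hpq hn); first by rewrite dotC dot_cross_l.
    by rewrite dotC dot_cross_r.
  move=> a ha.
  have [hfa [ogc [n1 n2]]] := hf a ha.
  exists (f a); split => //.
  by move: hfa; rewrite !inE => /orP[/eqP|/eqP]; [left|right].
Qed.
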